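(* Let $0<\alpha'<2/9$, $0<\beta'<1/4$, with $\tfrac98\alpha'\ne\beta'$ and $\alpha'\neq\beta'$. Let $\mathcal{S}$ be the separability of the label-augmented model and $\mathcal{S}^{(u)}$ that of the self-supervised model. Then $\mathcal{S}-\mathcal{S}^{(u)}>0$, i.e., incorporating ID label information increases the separation between ID nodes and the semantic OOD node.
   Context: Two toy five-node models with nodes, in order: 1 = angel in sketch (ID, class angel), 2 = tiger in sketch (ID, class tiger), 3 = angel in painting (covariate OOD), 4 = tiger in painting (covariate OOD), 5 = panda (semantic OOD); parameters $\alpha'=\alpha/\rho$, $\beta'=\beta/\rho$ (first-order approximation of an augmentation graph with $\eta_u=5,\eta_l=1$). Label-augmented model: $M=\begin{pmatrix}1-2\beta'-\frac32\alpha'&2\beta'&\frac{3}{\sqrt2}\alpha'&0&0\\2\beta'&1-2\beta'-\frac32\alpha'&0&\frac3{\sqrt2}\alpha'&0\\\frac3{\sqrt2}\alpha'&0&1-2\beta'-3\alpha'&2\beta'&0\\0&\frac3{\sqrt2}\alpha'&2\beta'&1-2\beta'-3\alpha'&0\\0&0&0&0&1\end{pmatrix}$, $C=7+12\beta'+12\alpha'$, $\Delta=\sqrt{C}\,\mathrm{diag}\big(\tfrac{1}{\sqrt2}(1-\beta'-\tfrac34\alpha'),\tfrac1{\sqrt2}(1-\beta'-\tfrac34\alpha'),1-\beta'-\tfrac32\alpha',1-\beta'-\tfrac32\alpha',1\big)$. Self-supervised model: $M_u=\begin{pmatrix}1-2\beta'-2\alpha'&2\beta'&2\alpha'&0&0\\2\beta'&1-2\beta'-2\alpha'&0&2\alpha'&0\\2\alpha'&0&1-2\beta'-2\alpha'&2\beta'&0\\0&2\alpha'&2\beta'&1-2\beta'-2\alpha'&0\\0&0&0&0&1\end{pmatrix}$,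 $C_u=5+8\beta'+8\alpha'$, $\Delta_u=\sqrt{C_u}\,\mathrm{diag}(1-\beta'-\alpha',1-\beta'-\alpha',1-\beta'-\alpha',1-\beta'-\alpha',1)$. For a model $(M,\Delta)$: let $V$ have orthonormal columns spanning eigenvectors for the three largest eigenvalues of $M$, $\Sigma$ the diagonal matrix of those eigenvalues, $Z=\Delta V\Sigma^{1/2}$ with rows $z_i^\top$, and separability $\tfrac12(\|z_1-z_5\|_2^2+\|z_2-z_5\|_2^2)$. *)

(* Defs.v *)
From HB Require Import structures.
From mathcomp Require Import all_boot all_order all_algebra.
Set Implicit Arguments. Unset Strict Implicit. Unset Printing Implicit Defensive.
Import Order.TTheory GRing.Theory Num.Theory.
Local Open Scope ring_scope.

(* Nodes 1..5 of the paper are the ordinals 0..4 of 'I_5. *)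

Section Models.
Variable R : rcfType.

Definition M_lab (a b : R) : 'M[R]_5 :=
  \matrix_(i < 5, j < 5)
   match nat_of_ord i, nat_of_ord j with
   | 0, 0 | 1, 1 => 1 - 2 * b - 3 / 2 * a
   | 2, 2 | 3, 3 => 1 - 2 * b - 3 * a
   | 0, 1 | 1, 0 | 2, 3 | 3, 2 => 2 * b
   | 0, 2 | 2, 0 | 1, 3 | 3, 1 => 3 / Num.sqrt 2 * a
   | 4, 4 => 1
   | _, _ => 0
   end.

Definition C_lab (a b : R) : R := 7 + 12 * b + 12 * a.

Definition Delta_lab (a b : R) : 'M[R]_5 :=
  Num.sqrt (C_lab a b) *:
  diag_mx (\row_(i < 5)
    match nat_of_ord i with
    | 0 | 1 => 1 / Num.sqrt 2 * (1 - b - 3 / 4 * a)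
    | 2 | 3 => 1 - b - 3 / 2 * a
    | _ => 1
    end).

Definition M_ssl (a b : R) : 'M[R]_5 :=
  \matrix_(i < 5, j < 5)
   match nat_of_ord i, nat_of_ord j with
   | 0, 0 | 1, 1 | 2, 2 | 3, 3 => 1 - 2 * b - 2 * a
   | 0, 1 | 1, 0 | 2, 3 | 3, 2 => 2 * b
   | 0, 2 | 2, 0 | 1, 3 | 3, 1 => 2 * a
   | 4, 4 => 1
   | _, _ => 0
   end.

Definition C_ssl (a b : R) : R := 5 + 8 * b + 8 * a.

Definition Delta_ssl (a b : R) : 'M[R]_5 :=
  Num.sqrt (C_ssl a b) *:
  diag_mx (\row_(i < 5)
    match nat_of_ord i with
    | 0 | 1 | 2 | 3 => 1 - b - a
    | _ => 1
    end).

(* V (5x3) has orthonormal columns, M V = V diag(s) (so the columns are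
   eigenvectors with eigenvalues s), and s are the three largest eigenvalues
   of M (with multiplicity): every eigenvalue of M with an eigenvector
   orthogonal to the columns of V is <= every entry of s. *)
Definition top3_eigen (M : 'M[R]_5) (V : 'M[R]_(5, 3)) (s : 'rV[R]_3) : Prop :=
  [/\ V^T *m V = 1%:M,
      M *m V = V *m diag_mx s &
      forall (x : 'cV[R]_5) (mu : R),
        x != 0 -> V^T *m x = 0 -> M *m x = mu *: x ->
        forall k : 'I_3, mu <= s 0 k].

Definition Zmat (Delta : 'M[R]_5) (V : 'M[R]_(5, 3)) (s : 'rV[R]_3)
  : 'M[R]_(5, 3) :=
  Delta *m V *m diag_mx (\row_k Num.sqrt (s 0 k)).

Definition sqdist (Z : 'M[R]_(5, 3)) (i j : 'I_5) : R :=
  \sum_(k < 3) (Z i k - Z j k) ^+ 2.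

Definition separability (Delta : 'M[R]_5) (V : 'M[R]_(5, 3)) (s : 'rV[R]_3) : R :=
  let Z := Zmat Delta V s in
  1 / 2 * (sqdist Z (inord 0) (inord 4) + sqdist Z (inord 1) (inord 4)).

End Models.

(* Main.v *)
Require Import Defs.
From HB Require Import structures.
From mathcomp Require Import all_boot all_order all_algebra.
From mathcomp Require Import ring lra.
Import Order.TTheory GRing.Theory Num.Theory.
Local Open Scope ring_scope.

Definition pm (sw : bool) (j : nat) : nat :=
  if sw then match j with 2 => 3 | 3 => 2 | _ => j end else j.

Definition ulab {R : rcfType} (r w : R) (i j : nat) : R :=
 match j with
 | 0 => if i == 4 then 1 else 0
 | 1 => match i with 0|1 => r/w | 2|3 => 1/w | _ => 0 end
 | 2 => match i with 0|1 => 1/w | 2|3 => -r/w | _ => 0 end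
 | 3 => match i with 0 => r/w | 1 => -r/w | 2 => 1/w | 3 => -1/w | _ => 0 end
 | _ => match i with 0 => 1/w | 1 => -1/w | 2 => -r/w | 3 => r/w | _ => 0 end
 end.

Definition llab {R : rcfType} (a b : R) (j : nat) : R :=
 match j with 0 | 1 => 1 | 2 => 1 - 9/2*a | 3 => 1 - 4*b | _ => 1 - 4*b - 9/2*a end.

Definition Ulab {R : rcfType} (r w : R) sw : 'M[R]_5 := \matrix_(i, j) ulab r w i (pm sw j).
Definition Llab {R : rcfType} (a b : R) sw : 'rV[R]_5 := \row_j llab a b (pm sw j).

Lemma Ulab_orth (R : rcfType) (r w : R) sw : r ^+ 2 = 2 -> w ^+ 2 = 6 -> w != 0 ->
  (Ulab r w sw)^T *m Ulab r w sw = 1%:M.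
Proof.
move=> hr hw w0; apply/matrixP => i j; rewrite !mxE !big_ord_recr big_ord0 /=.
case: i => [[|[|[|[|[|i]]]]] hi] //; case: j => [[|[|[|[|[|j]]]]] hj] //;
  rewrite !mxE /=; case: sw => /=; field: hr hw; rewrite ?w0 //.
Qed.

Lemma Ulab_eig (R : rcfType) (a b : R) sw : 
  M_lab a b *m Ulab (Num.sqrt 2) (Num.sqrt 6) sw = Ulab (Num.sqrt 2) (Num.sqrt 6) sw *m diag_mx (Llab a b sw).
Proof.
have hr : Num.sqrt 2 ^+ 2 = 2 :> R by rewrite sqr_sqrtr.
have r0 : Num.sqrt 2 != 0 :> R by rewrite sqrtr_eq0 -ltNge.
have w0 : Num.sqrt 6 != 0 :> R by rewrite sqrtr_eq0 -ltNge.
rewrite /M_lab; move: (Num.sqrt 2) (Num.sqrt 6) hr r0 w0 => r w hr r0 w0.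
apply/matrixP => i j; rewrite mul_mx_diag !mxE !big_ord_recr big_ord0 /=.
case: i => [[|[|[|[|[|i]]]]] hi] //; case: j => [[|[|[|[|[|j]]]]] hj] //;
  rewrite !mxE /=; case: sw => /=; field: hr; rewrite ?w0 ?r0 //.
Qed.

Lemma Llab_gap (R : rcfType) (a b : R) sw : 0 < a -> 0 < b ->
  (if sw then b < 9/8*a else 9/8*a < b) ->
  forall i j : 'I_5, (i < 3)%N -> (3 <= j)%N -> Llab a b sw 0 j < Llab a b sw 0 i.
Proof.
move=> ha hb h i j; case: i => [[|[|[|i]]] hi] //; case: j => [[|[|[|[|[|j]]]]] hj] // _ _;
  rewrite !mxE /=; case: sw h => /= h; lra.
Qed.

Lemma spec5 (R : rcfType) (M U : 'M[R]_5) (lam : 'rV[R]_5) (V : 'M[R]_(5,3)) (s : 'rV[R]_3) :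
  U^T *m U = 1%:M -> M *m U = U *m diag_mx lam ->
  (forall i j : 'I_5, (i < 3)%N -> (3 <= j)%N -> lam 0 j < lam 0 i) ->
  top3_eigen M V s ->
  V *m diag_mx s *m V^T = U *m diag_mx (\row_j (if (j < 3)%N then lam 0 j else 0)) *m U^T
  /\ forall k, exists2 j : 'I_5, (j < 3)%N & s 0 k = lam 0 j.
Proof.
move=> hU hMU hgap [hV hMV hmax].
have hUU : U *m U^T = 1%:M by apply: mulmx1C.
move Ceq: (U^T *m V) => C.
have hVC : V = U *m C by rewrite -Ceq mulmxA hUU mul1mx.
have hCt : C^T = V^T *m U by rewrite -Ceq trmx_mul trmxK.
have hCC : C^T *m C = 1%:M by rewrite hCt -Ceq mulmxA -(mulmxA V^T) hUU mulmx1 hV.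
have hUM : U^T *m M = diag_mx lam *m U^T.
  have -> : U^T *m M = U^T *m M *m (U *m U^T) by rewrite hUU mulmx1.
  by rewrite mulmxA -(mulmxA U^T) hMU mulmxA hU mul1mx.
have hLC : diag_mx lam *m C = C *m diag_mx s.
  by rewrite -Ceq mulmxA -hUM -mulmxA hMV mulmxA.
have hLCe : forall j k, lam 0 j * C j k = C j k * s 0 k.
  move=> j k; move/matrixP: hLC => /(_ j k).
  by rewrite mul_diag_mx mul_mx_diag !mxE.
move Qeq: (C *m C^T) => Q.
have hQt : Q^T = Q by rewrite -Qeq trmx_mul trmxK.
have hQQ : Q *m Q = Q by rewrite -Qeq mulmxA -(mulmxA C) hCC mulmx1.
have hQtr : \tr Q = 3%:R by rewrite -Qeq mxtrace_mulC hCC mxtrace1.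
have hLQ : diag_mx lam *m Q = Q *m diag_mx lam.
  rewrite -Qeq mulmxA hLC -mulmxA -mulmxA; congr (C *m _).
  have trd : forall n (d : 'rV[R]_n), (diag_mx d)^T = diag_mx d.
    by move=> n d; apply/matrixP => i l; rewrite !mxE eq_sym; case: (eqVneq l i) => [->|].
  have -> : C^T *m diag_mx lam = (diag_mx lam *m C)^T by rewrite (trmx_mul (diag_mx lam) C) trd.
  by rewrite hLC (trmx_mul C) trd.
have hQe : forall i j, Q i j = \sum_k C i k * C j k.
  by move=> i j; rewrite -Qeq mxE; apply: eq_bigr => k _; rewrite mxE.
have hQd : forall i, 0 <= Q i i.
  by move=> i; rewrite hQe; apply: sumr_ge0 => k _; rewrite -expr2 sqr_ge0.
have hL : forall j k, s 0 k < lam 0 j -> Q j j = 1.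
  move=> j k hlt; apply/eqP; apply/negPn/negP => hne.
  pose y := (1%:M - Q) *m delta_mx j (0 : 'I_1).
  have hy : y j 0 = 1 - Q j j.
    rewrite /y !mxE (bigD1 j) //= big1 ?addr0.
      by rewrite !mxE eqxx /= mulr1 mulr1n.
    by move=> i hi; rewrite !mxE (negbTE hi) /= mulr0.
  have y0 : y != 0.
    apply/negP => /eqP/matrixP/(_ j 0); rewrite hy !mxE => /eqP.
    by rewrite subr_eq0 eq_sym (negbTE hne).
  pose x := U *m y.
  have x0 : x != 0.
    apply: contra y0 => /eqP hx; apply/eqP.
    by rewrite -[y]mul1mx -hU -mulmxA -/x hx mulmx0.
  have hVx : V^T *m x = 0.
    rewrite /x mulmxA -hCt /y mulmxA mulmxBr mulmx1 -Qeq mulmxA hCC mul1mx.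
    by rewrite subrr mul0mx.
  have hLy : diag_mx lam *m y = lam 0 j *: y.
    rewrite /y mulmxA mulmxBr mulmx1 hLQ.
    have -> : diag_mx lam - Q *m diag_mx lam = (1%:M - Q) *m diag_mx lam by rewrite mulmxBl mul1mx.
    rewrite -mulmxA.
    rewrite scalemxAr; congr (_ *m _).
    apply/matrixP => i l; rewrite mul_diag_mx !mxE.
    by case: (eqVneq i j) => [->|hij]; rewrite ?mulr1 ?mulr0 //= ?andbF ?andFb ?mulr0.
  have hMx : M *m x = lam 0 j *: x.
    by rewrite /x mulmxA hMU -mulmxA hLy -scalemxAr.
  have := hmax x (lam 0 j) x0 hVx hMx k.
  by rewrite leNgt hlt.
have hS : forall j k, C j k != 0 -> s 0 k = lam 0 j.
  by move=> j k hc; apply: (mulIf hc); rewrite [s 0 k * _]mulrC -hLCe.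
have hCsq : forall j, Q j j = \sum_k C j k ^+ 2.
  by move=> j; rewrite hQe; apply: eq_bigr => k _; rewrite expr2.
have hCz : forall j, Q j j = 0 -> forall k, C j k = 0.
  move=> j hj k; apply/eqP; rewrite -sqrf_eq0; apply/eqP.
  by move: hj; rewrite hCsq => /psumr_eq0P; apply => // l _; apply: sqr_ge0.
have hsplit : \tr Q = \sum_(i < 5 | (i < 3)%N) Q i i + \sum_(i < 5 | ~~ (i < 3)%N) Q i i.
  by rewrite /mxtrace (bigID (fun i : 'I_5 => (i < 3)%N)).
have card3 : \sum_(i < 5 | (i < 3)%N) (1 : R) = 3%:R.
  by rewrite big_mkcond !big_ord_recr big_ord0 /=; ring.
have hbot : forall j : 'I_5, (3 <= j)%N -> forall k, C j k = 0.
  move=> j hj k; apply/eqP; apply/negP => /negP hc.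
  have hsk := hS j k hc.
  have h1 : \sum_(i < 5 | (i < 3)%N) Q i i = 3%:R.
    rewrite -card3; apply: eq_bigr => i hi; apply: (hL i k).
    by rewrite hsk; apply: hgap.
  have h2 : \sum_(i < 5 | ~~ (i < 3)%N) Q i i = 0.
    by apply: (addrI (3%:R : R)); rewrite addr0 -{1}h1 -hsplit hQtr.
  have := psumr_eq0P (fun i _ => hQd i) h2 (i := j).
  rewrite -leqNgt => /(_ hj) /hCz /(_ k) hck.
  by move: hc; rewrite hck eqxx.
have hQsym : forall i l, Q l i = Q i l.
  by move=> i l; move/matrixP: hQt => /(_ i l); rewrite mxE.
have hQsq : forall i, Q i i = Q i i ^+ 2 + \sum_(l | l != i) Q i l ^+ 2.
  move=> i; rewrite -{1}hQQ mxE (bigD1 i) //= expr2; congr (_ + _).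
  by apply: eq_bigr => l _; rewrite hQsym expr2.
have hrest : forall i, 0 <= \sum_(l | l != i) Q i l ^+ 2.
  by move=> i; apply: sumr_ge0 => l _; apply: sqr_ge0.
have hQle1 : forall i, Q i i <= 1.
  move=> i; have := hQsq i; have := hrest i; have := hQd i; nra.
have hQbot : forall j l : 'I_5, (3 <= j)%N -> Q j l = 0.
  by move=> j l hj; rewrite hQe big1 // => k _; rewrite hbot // mul0r.
have htop : forall i : 'I_5, (i < 3)%N -> Q i i = 1.
  have h2 : \sum_(i < 5 | ~~ (i < 3)%N) Q i i = 0.
    by apply: big1 => i; rewrite -leqNgt => hi; apply: hQbot.
  have h1 : \sum_(i < 5 | (i < 3)%N) (1 - Q i i) = 0.
    rewrite sumrB card3; apply/eqP; rewrite subr_eq0 eq_sym; apply/eqP.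
    by rewrite -hQtr hsplit h2 addr0.
  move=> i hi; apply/eqP; rewrite eq_sym -subr_eq0; apply/eqP.
  by apply: (psumr_eq0P _ h1) => // l _; rewrite subr_ge0.
have hoff : forall i l, i != l -> Q i l = 0.
  move=> i l hil; case: (ltnP i 3) => hi; last by apply: hQbot.
  have := hQsq i; rewrite htop // expr1n => /eqP; rewrite -subr_eq0 opprD addrA subrr add0r oppr_eq0 => /eqP h.
  apply/eqP; rewrite -sqrf_eq0; apply/eqP.
  by apply: (psumr_eq0P _ h) => [k _|]; [apply: sqr_ge0 | rewrite eq_sym].
have hQval : forall i l, Q i l = ((i == l) && (i < 3)%N)%:R.
  move=> i l; case: eqVneq => [<-|hil] /=; last by rewrite hoff.
  by case: ltnP => hi; [rewrite htop | rewrite hQbot].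
split.
  rewrite hVC trmx_mul -!mulmxA; congr (U *m _).
  rewrite !mulmxA -hLC -(mulmxA (diag_mx lam)) Qeq; congr (_ *m U^T).
  apply/matrixP => i l; rewrite mul_diag_mx !mxE hQval.
  case: (eqVneq i l) => [->|hil] /=; last by rewrite mulr0.
  by case: ltnP => _; rewrite ?mulr1 ?mulr0.
move=> k.
have hk : \sum_j C j k ^+ 2 = 1.
  move/matrixP: hCC => /(_ k k); rewrite !mxE eqxx /= => hh; rewrite -[RHS]hh.
  by apply: eq_bigr => j _; rewrite mxE expr2.
case: (pickP (fun j => C j k != 0)) => [j hj | hn].
  exists j; last by apply: hS.
  by rewrite ltnNge; apply/negP => hj3; move: hj; rewrite hbot // eqxx.
exfalso; move: hk; rewrite big1 => [/eqP|j _]; first by rewrite eq_sym oner_eq0.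
by have := hn j; rewrite /= => /negbFE /eqP ->; rewrite expr0n.
Qed.

Lemma Wentry (R : rcfType) (V : 'M[R]_(5,3)) (s : 'rV[R]_3) i j :
  (V *m diag_mx s *m V^T) i j = \sum_k V i k * s 0 k * V j k.
Proof. by rewrite mul_mx_diag mxE; apply: eq_bigr => k _; rewrite !mxE. Qed.

Lemma sqdist_eq (R : rcfType) (c : R) (dv : 'rV[R]_5) (V : 'M[R]_(5,3)) (s : 'rV[R]_3) i j :
  (forall k, 0 <= s 0 k) ->
  sqdist (Zmat (c *: diag_mx dv) V s) i j =
  c ^+ 2 * (dv 0 i ^+ 2 * (V *m diag_mx s *m V^T) i i
            - 2 * dv 0 i * dv 0 j * (V *m diag_mx s *m V^T) i j
            + dv 0 j ^+ 2 * (V *m diag_mx s *m V^T) j j).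
Proof.
move=> hs.
have hZ : forall i k, Zmat (c *: diag_mx dv) V s i k = c * dv 0 i * V i k * Num.sqrt (s 0 k).
  move=> i' k; rewrite /Zmat mul_mx_diag mxE -scalemxAl mxE mul_diag_mx !mxE.
  by rewrite mulrA.
rewrite /sqdist !Wentry !mulr_sumr -sumrB -big_split mulr_sumr; apply: eq_bigr => k _.
rewrite !hZ /=; have h : Num.ExtraDef.sqrtr (s 0 k) ^+ 2 = s 0 k :> R by rewrite sqr_sqrtr. move: (Num.ExtraDef.sqrtr (s 0 k)) h => t h. ring: h.
Qed.

Lemma WentryG (R : rcfType) m n (A : 'M[R]_(m,n)) (d : 'rV[R]_n) i j :
  (A *m diag_mx d *m A^T) i j = \sum_k A i k * d 0 k * A j k.
Proof. by rewrite mul_mx_diag mxE; apply: eq_bigr => k _; rewrite !mxE. Qed.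

Lemma sep_lab (R : rcfType) (a b : R) V s : 0 < a -> a < 2/9 -> 0 < b -> b < 1/4 ->
  9/8*a != b -> top3_eigen (M_lab a b) V s ->
  separability (Delta_lab a b) V s = C_lab a b * (1/2 * (1 - b - 3/4*a)^+2 *
     (if 9/8*a < b then 1/2 - 3/4*a else (2 - 4*b)/3) + 1).
Proof.
move=> ha1 ha2 hb1 hb2 hne hT.
have hr : Num.sqrt 2 ^+ 2 = 2 :> R by rewrite sqr_sqrtr.
have hw : Num.sqrt 6 ^+ 2 = 6 :> R by rewrite sqr_sqrtr.
have r0 : Num.sqrt 2 != 0 :> R by rewrite sqrtr_eq0 -ltNge.
have w0 : Num.sqrt 6 != 0 :> R by rewrite sqrtr_eq0 -ltNge.
have hC : Num.sqrt (C_lab a b) ^+ 2 = C_lab a b by rewrite sqr_sqrtr // /C_lab; lra.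
pose sw := ~~ (9/8*a < b).
have hsw : if sw then b < 9/8*a else 9/8*a < b.
  rewrite /sw; case: ltgtP hne => //= h _; by rewrite ?h.
have [hW hs] := spec5 R _ _ _ _ _ (@Ulab_orth R _ _ sw hr hw w0) (Ulab_eig R a b sw) (@Llab_gap R a b sw ha1 hb1 hsw) hT.
have hs0 : forall k, 0 <= s 0 k.
  move=> k; case: (hs k) => j hj ->; case: j hj => [[|[|[|j]]] hj] // _;
  rewrite !mxE /=; case: (sw) => /=; lra.
rewrite /separability /Delta_lab !sqdist_eq // hW !WentryG.
rewrite !big_ord_recr !big_ord0 /= /Ulab /Llab !mxE /= !inordK //=.
rewrite /sw; case: (9 / 8 * a < b) => /=.
all: move: hr hw hC r0 w0; move: (Num.sqrt (C_lab a b)) (Num.sqrt 2) (Num.sqrt 6) => c r w hr hw hC r0 w0.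
all: by field: hr hw hC; rewrite ?r0 ?w0.
Qed.

Definition ussl {R : rcfType} (i j : nat) : R :=
 match j with
 | 0 => if i == 4 then 1 else 0
 | 1 => match i with 0|1|2|3 => 1/2 | _ => 0 end
 | 2 => match i with 0|1 => 1/2 | 2|3 => -1/2 | _ => 0 end
 | 3 => match i with 0|2 => 1/2 | 1|3 => -1/2 | _ => 0 end
 | _ => match i with 0|3 => 1/2 | 1|2 => -1/2 | _ => 0 end
 end.

Definition lssl {R : rcfType} (a b : R) (j : nat) : R :=
 match j with 0 | 1 => 1 | 2 => 1 - 4*a | 3 => 1 - 4*b | _ => 1 - 4*a - 4*b end.

Definition Ussl {R : rcfType} sw : 'M[R]_5 := \matrix_(i, j) ussl i (pm sw j).
Definition Lssl {R : rcfType} (a b : R) sw : 'rV[R]_5 := \row_j lssl a b (pm sw j).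

Lemma Ussl_orth (R : rcfType) sw : (Ussl sw)^T *m Ussl sw = 1%:M :> 'M[R]_5.
Proof.
apply/matrixP => i j; rewrite !mxE !big_ord_recr big_ord0 /=.
case: i => [[|[|[|[|[|i]]]]] hi] //; case: j => [[|[|[|[|[|j]]]]] hj] //;
  rewrite !mxE /=; case: sw => /=; field; done.
Qed.

Lemma Ussl_eig (R : rcfType) (a b : R) sw :
  M_ssl a b *m Ussl sw = Ussl sw *m diag_mx (Lssl a b sw).
Proof.
apply/matrixP => i j; rewrite mul_mx_diag !mxE !big_ord_recr big_ord0 /=.
case: i => [[|[|[|[|[|i]]]]] hi] //; case: j => [[|[|[|[|[|j]]]]] hj] //;
  rewrite !mxE /=; case: sw => /=; field; done.
Qed.

Lemma Lssl_gap (R : rcfType) (a b : R) sw : 0 < a -> 0 < b ->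
  (if sw then b < a else a < b) ->
  forall i j : 'I_5, (i < 3)%N -> (3 <= j)%N -> Lssl a b sw 0 j < Lssl a b sw 0 i.
Proof.
move=> ha hb h i j; case: i => [[|[|[|i]]] hi] //; case: j => [[|[|[|[|[|j]]]]] hj] // _ _;
  rewrite !mxE /=; case: sw h => /= h; lra.
Qed.

Lemma sep_ssl (R : rcfType) (a b : R) V s : 0 < a -> a < 2/9 -> 0 < b -> b < 1/4 ->
  a != b -> top3_eigen (M_ssl a b) V s ->
  separability (Delta_ssl a b) V s = C_ssl a b * ((1 - a - b)^+2 *
     (if a < b then (1 - 2*a)/2 else (1 - 2*b)/2) + 1).
Proof.
move=> ha1 ha2 hb1 hb2 hne hT.
have hC : Num.sqrt (C_ssl a b) ^+ 2 = C_ssl a b by rewrite sqr_sqrtr // /C_ssl; lra.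
pose sw := ~~ (a < b).
have hsw : if sw then b < a else a < b.
  rewrite /sw; case: ltgtP hne => //= h _; by rewrite ?h.
have [hW hs] := spec5 R _ _ _ _ _ (Ussl_orth R sw) (Ussl_eig R a b sw) (@Lssl_gap R a b sw ha1 hb1 hsw) hT.
have hs0 : forall k, 0 <= s 0 k.
  move=> k; case: (hs k) => j hj ->; case: j hj => [[|[|[|j]]] hj] // _;
  rewrite !mxE /=; case: (sw) => /=; lra.
rewrite /separability /Delta_ssl !sqdist_eq // hW !WentryG.
rewrite !big_ord_recr !big_ord0 /= /Ussl /Lssl !mxE /= !inordK //=.
rewrite /sw; case: (a < b) => /=.
all: move: hC; move: (Num.sqrt (C_ssl a b)) => c hC.
all: by field: hC.
Qed.

Lemma final (R : rcfType) (a b : R) : 0 < a -> a < 2/9 -> 0 < b -> b < 1/4 ->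
  0 < C_lab a b * (1/2 * (1 - b - 3/4*a)^+2 *
     (if 9/8*a < b then 1/2 - 3/4*a else (2 - 4*b)/3) + 1)
  - C_ssl a b * ((1 - a - b)^+2 * (if a < b then (1 - 2*a)/2 else (1 - 2*b)/2) + 1).
Proof.
move=> ha1 ha2 hb1 hb2; rewrite /C_lab /C_ssl.
set P := (if 9/8*a < b then _ else _).
set Pu := (if a < b then _ else _).
have hP : 1/3 <= P by rewrite /P; case: ifP => _; lra.
have hPu : 0 <= Pu <= 1/2 by rewrite /Pu; case: ifP => _; lra.
move: hPu => /andP [hPu1 hPu2].
set d := 1 - b - 3/4*a. set e := 1 - a - b.
have hd : 0 <= e <= d by apply/andP; split; rewrite /d /e; lra.
move: hd => /andP [he hed].
have hd1 : d <= 1 by rewrite /d; lra.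
have hd0 : 0 <= d by lra.
have he2 : e ^+ 2 <= d ^+ 2 by rewrite !expr2; nra.
have hd2 : d ^+ 2 <= 1 by rewrite expr2; nra.
have he20 : 0 <= e ^+ 2 by apply: sqr_ge0.
set C := 7 + 12 * b + 12 * a. set Cu := 5 + 8 * b + 8 * a.
have hC : 0 < C by rewrite /C; lra.
have hCu : 0 < Cu by rewrite /Cu; lra.
have h1 : Cu * (e ^+ 2 * Pu) <= Cu * (d ^+ 2 / 2).
  rewrite ler_pM2l //; nra.
have h2 : C * (d ^+ 2 / 6) <= C * (1/2 * d ^+ 2 * P).
  rewrite ler_pM2l //; nra.
have h3 : 0 < C - Cu + C * (d ^+ 2 / 6) - Cu * (d ^+ 2 / 2).
  rewrite /C /Cu; nra.
nra.
Qed.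

Theorem theorem7 (R : rcfType) (a b : R) :
  0 < a -> a < 2 / 9 -> 0 < b -> b < 1 / 4 ->
  9 / 8 * a != b -> a != b ->
  forall (V : 'M[R]_(5, 3)) (s : 'rV[R]_3) (Vu : 'M[R]_(5, 3)) (su : 'rV[R]_3),
    top3_eigen (M_lab a b) V s ->
    top3_eigen (M_ssl a b) Vu su ->
    0 < separability (Delta_lab a b) V s - separability (Delta_ssl a b) Vu su.
Proof.
move=> ha1 ha2 hb1 hb2 h98 hab V s Vu su hT hTu.
rewrite (sep_lab R a b V s ha1 ha2 hb1 hb2 h98 hT) (sep_ssl R a b Vu su ha1 ha2 hb1 hb2 hab hTu).
exact: final.
Qed.
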